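(* Let $R$ be a $\mathbb{C}$-algebra which is a noetherian UFD, let $r,s\in R$ be nonzero elements sharing no common non-unit factor, and let $A_{r,s}:=R[U,V]/(rU-sV-1)$ with $u,v$ the residue classes of $U,V$. Assume that $A_{r,s}$ is a UFD and that $ML(A_{r,s})=R$. Then $\operatorname{LND}(A_{r,s})=R\,E=\{aE: a\in R\}$, where $E$ is the $R$-derivation of $A_{r,s}$ determined by $E(u)=s$, $E(v)=r$.
   Context: A derivation $D$ of a ring $B$ is locally nilpotent if for every $b\in B$ there is $n$ with $D^n(b)=0$; $\operatorname{LND}(B)$ denotes the set of locally nilpotent $\mathbb{C}$-derivations of the $\mathbb{C}$-algebra $B$. The Makar-Limanov invariant $ML(B)$ is the intersection of the kernels of all $D\in\operatorname{LND}(B)$. The derivation $E$ (written $s\partial_u+r\partial_v$ in the paper) is well defined since $E(ru-sv-1)=rs-sr=0$. *)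

(* Defs.v *)
From HB Require Import structures.
From mathcomp Require Import all_boot all_algebra.
From mathcomp Require Export complex Rstruct.
Set Implicit Arguments. Unset Strict Implicit. Unset Printing Implicit Defensive.
Import GRing.Theory.
Local Open Scope ring_scope.

Definition CC : fieldType := complex.complex Rdefinitions.R.

Section RingNotions.
Variable T : comNzRingType.

Definition dvdr_ (a b : T) : Prop := exists c, b = a * c.
Definition unit_ (a : T) : Prop := dvdr_ a 1.
Definition irreducible_ (p : T) : Prop :=
  p <> 0 /\ ~ unit_ p /\ forall a b, p = a * b -> unit_ a \/ unit_ b.
Definition prime_ (p : T) : Prop :=
  p <> 0 /\ ~ unit_ p /\ forall a b, dvdr_ p (a * b) -> dvdr_ p a \/ dvdr_ p b.

Definition is_UFD : Prop :=
  [/\ (1 : T) <> 0,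
      (forall a b : T, a * b = 0 -> a = 0 \/ b = 0),
      (forall a : T, a <> 0 -> ~ unit_ a ->
         exists s : seq T, (forall p, p \in s -> irreducible_ p) /\ a = \prod_(p <- s) p)
    & (forall p : T, irreducible_ p -> prime_ p)].

Definition is_ideal (I : T -> Prop) : Prop :=
  [/\ I 0, (forall x y, I x -> I y -> I (x + y)) & (forall a x, I x -> I (a * x))].

Definition is_noetherian : Prop :=
  forall I : nat -> T -> Prop, (forall n, is_ideal (I n)) ->
    (forall n x, I n x -> I n.+1 x) ->
    exists N, forall m, (N <= m)%N -> forall x, I m x -> I N x.

(* k-derivation of T, where k acts on T through the map iota : K -> T:
   an additive map, k-linear, satisfying the Leibniz rule. *)
Definition is_derivation (K : Type) (iota : K -> T) (D : T -> T) : Prop :=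
  [/\ (forall x y, D (x + y) = D x + D y),
      (forall c x, D (iota c * x) = iota c * D x)
    & (forall x y, D (x * y) = x * D y + y * D x)].

Definition locally_nilpotent (D : T -> T) : Prop :=
  forall b, exists n, iter n D b = 0.

Definition is_LND (K : Type) (iota : K -> T) (D : T -> T) : Prop :=
  is_derivation iota D /\ locally_nilpotent D.

End RingNotions.

(* The polynomial ring R[U,V] is {poly {poly R}}: U is the inner variable,
   V the outer one. *)
Section Presentation.
Variable R : comNzRingType.
Definition varU : {poly {poly R}} := ('X)%:P.
Definition varV : {poly {poly R}} := 'X.
Definition cst (a : R) : {poly {poly R}} := a%:P%:P.
Definition relf (r s : R) : {poly {poly R}} := cst r * varU - cst s * varV - 1.
End Presentation.

(* Main.v *)
Require Import Defs.
From mathcomp Require Import all_boot all_algebra.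
From Stdlib Require Import Lia.
From mathcomp Require Import zify ring.
Import GRing.Theory Num.Theory.
Local Open Scope ring_scope.

Lemma charCC (n : nat) : (0 < n)%N -> (n%:R : CC) != 0.
Proof. move=> n0. change ((n%:R : complex.complex Rdefinitions.R) != 0). by rewrite pnatr_eq0 -lt0n. Qed.

Lemma der0 {A : comNzRingType} {D : A -> A} :
  (forall x y, D (x+y) = D x + D y) -> D 0 = 0.
Proof.
move=> Dadd; have H := Dadd 0 0; rewrite addr0 in H.
have := congr1 (fun t => t - D 0) H; rewrite subrr addrK => <- //.
Qed.

Lemma iter_add {A : comNzRingType} {D : A -> A} :
  (forall x y, D (x+y) = D x + D y) ->
  forall n x y, iter n D (x + y) = iter n D x + iter n D y.
Proof. by move=> Dadd; elim=> //= n IH x y; rewrite IH Dadd. Qed.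

Lemma iter_0 {A : comNzRingType} {D : A -> A} :
  (forall x y, D (x+y) = D x + D y) -> forall n, iter n D 0 = 0.
Proof. by move=> Dadd; elim=> //= n ->; apply: der0. Qed.

Lemma nil_mul {A : comNzRingType} {D : A -> A} :
  (forall x y, D (x+y) = D x + D y) ->
  (forall x y, D (x * y) = x * D y + y * D x) ->
  forall k m n x y, (m + n = k)%N -> iter m D x = 0 -> iter n D y = 0 ->
    iter k D (x * y) = 0.
Proof.
move=> Dadd Dmul k; elim: k => [|k IH] [|m] [|n] x y hk hx hy;
  try (by rewrite (_ : x = 0) // mul0r (iter_0 Dadd));
  try (by rewrite (_ : y = 0) // mulr0 (iter_0 Dadd)); try lia.
rewrite iterSr in hx; rewrite iterSr in hy.
rewrite iterSr Dmul (iter_add Dadd) (mulrC y).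
rewrite (IH m.+1 n x (D y)) ?(IH m n.+1 (D x) y) ?addr0 //; try lia.
by rewrite iterSr. by rewrite iterSr.
Qed.

Lemma top_mul {A : comNzRingType} {D : A -> A} :
  (forall x y, D (x+y) = D x + D y) ->
  (forall x y, D (x * y) = x * D y + y * D x) ->
  forall k m n x y, (m + n = k)%N -> iter m.+1 D x = 0 -> iter n.+1 D y = 0 ->
    exists N, (0 < N)%N /\ iter k D (x * y) = N%:R * (iter m D x * iter n D y).
Proof.
move=> Dadd Dmul k; elim: k => [|k IH] m n x y hk hx hy.
  have [-> ->] : m = 0%N /\ n = 0%N by lia.
  by exists 1%N; rewrite mul1r.
rewrite iterSr Dmul (iter_add Dadd) (mulrC y).
case: m hk hx => [|m] hk hx; case: n hk hy => [|n] hk hy.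
- lia.
- have Dx0 : D x = 0 by [].
  have [N [N0 HN]] := IH 0%N n x (D y) ltac:(lia) hx ltac:(by rewrite -iterSr).
  exists N; split => //.
  by rewrite Dx0 mul0r (iter_0 Dadd) addr0 HN -iterSr.
- have Dy0 : D y = 0 by [].
  have [N [N0 HN]] := IH m 0%N (D x) y ltac:(lia) ltac:(by rewrite -iterSr) hy.
  exists N; split => //.
  by rewrite Dy0 mulr0 (iter_0 Dadd) add0r HN -iterSr.
- have [N1 [N10 HN1]] := IH m.+1 n x (D y) ltac:(lia) hx ltac:(by rewrite -iterSr).
  have [N2 [N20 HN2]] := IH m n.+1 (D x) y ltac:(lia) ltac:(by rewrite -iterSr) hy.
  exists (N1 + N2)%N; split; first lia.
  by rewrite HN1 HN2 -!iterSr natrD mulrDl.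
Qed.

Lemma nu_ex {A : comNzRingType} {D : A -> A} :
  forall k a, iter k D a = 0 -> a <> 0 ->
    exists m, iter m.+1 D a = 0 /\ iter m D a <> 0.
Proof.
elim=> [|k IH] a hk ha; first by [].
have [Da0|Da0] := eqVneq (D a) 0; first by exists 0%N.
have [m [h1 h2]] := IH (D a) ltac:(by rewrite -iterSr) (elimN eqP Da0).
by exists m.+1; split; rewrite iterSr.
Qed.

Lemma fact_closed {A : comNzRingType} {D : A -> A} :
  (forall x y, D (x+y) = D x + D y) ->
  (forall x y, D (x * y) = x * D y + y * D x) ->
  (forall b, exists n, iter n D b = 0) ->
  (forall a b : A, a * b = 0 -> a = 0 \/ b = 0) ->
  (forall N, (0 < N)%N -> (N%:R : A) <> 0) ->
  forall a b, D (a * b) = 0 -> a * b <> 0 -> D a = 0.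
Proof.
move=> Dadd Dmul LN dom ch a b hab ab0.
have a0 : a <> 0 by move=> a0; apply: ab0; rewrite a0 mul0r.
have b0 : b <> 0 by move=> b0; apply: ab0; rewrite b0 mulr0.
have [ka hka] := LN a; have [kb hkb] := LN b.
have [m [m1 m2]] := nu_ex _ _ hka a0; have [n [n1 n2]] := nu_ex _ _ hkb b0.
have [N [N0 HN]] := top_mul Dadd Dmul (m + n)%N m n a b (erefl _) m1 n1.
case: m m1 m2 HN => [|m] m1 m2 HN; first by [].
exfalso.
move: HN; rewrite addSn iterSr hab (iter_0 Dadd) => /esym /dom [].
  exact: ch.
by move/dom => [].
Qed.

Lemma poly_closed (R : comNzRingType) (A : comNzRingType)
  (phi : {rmorphism {poly {poly R}} -> A}) (P : A -> Prop) :
  (forall a, P (phi (cst a))) -> P (phi (varU R)) -> P (phi (varV R)) ->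
  (forall x y, P x -> P y -> P (x + y)) -> (forall x y, P x -> P y -> P (x * y)) ->
  forall p, P (phi p).
Proof.
move=> Pc PU PV Padd Pmul.
have PC : forall c : {poly R}, P (phi c%:P).
  elim/poly_ind => [|q c IH]; first by have := Pc 0; rewrite /cst !rmorph0.
  rewrite polyCD polyCM rmorphD rmorphM; apply: Padd; first by apply: Pmul.
  exact: Pc.
elim/poly_ind => [|q c IH]; first by have := Pc 0; rewrite /cst !rmorph0.
rewrite rmorphD rmorphM; apply: Padd => //; exact: Pmul.
Qed.

Lemma slice {A : comNzRingType} {D : A -> A} :
  (forall x y, D (x+y) = D x + D y) ->
  forall k z, iter k D z = 0 -> D z <> 0 -> exists w, D w <> 0 /\ D (D w) = 0.
Proof.
move=> Dadd; elim=> [|k IH] z hk hz; first by exfalso; apply: hz; rewrite (_ : z = 0) // (der0 Dadd).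
have [DDz|DDz] := eqVneq (D (D z)) 0; first by exists z.
by apply: (IH (D z)) => //; [rewrite -iterSr | apply/eqP].
Qed.

Theorem mainTheorem3 (R : comAlgType CC) (r s : R)
  (A : comNzRingType) (phi : {rmorphism {poly {poly R}} -> A}) :
  is_noetherian R -> is_UFD R ->
  r <> 0 -> s <> 0 ->
  (forall d : R, dvdr_ d r -> dvdr_ d s -> unit_ d) ->
  (forall a : A, exists p, phi p = a) ->
  (forall p, phi p = 0 <-> exists g, p = g * relf r s) ->
  is_UFD A ->
  (forall x : A, (forall D : A -> A,
       is_LND (fun c : CC => phi (cst (c%:A))) D -> D x = 0)
     <-> exists a : R, x = phi (cst a)) ->
  forall E : A -> A,
    is_derivation (fun a : R => phi (cst a)) E ->
    E (phi (varU R)) = phi (cst s) ->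
    E (phi (varV R)) = phi (cst r) ->
  forall D : A -> A,
    is_LND (fun c : CC => phi (cst (c%:A))) D <->
    exists a : R, forall x, D x = phi (cst a) * E x.
Proof.
move=> _ _ _ _ _ surj ker [_ dom _ _] ML E [Eadd Elin Emul] Eu Ev.
have Elin' : forall c x, E (phi (cst c) * x) = phi (cst c) * E x := Elin.
set u := phi (varU R); set v := phi (varV R).
have E1 : E 1 = 0.
  have H := Emul 1 1; rewrite mulr1 mul1r in H.
  have := congr1 (fun t => t - E 1) H; rewrite subrr addrK => <- //.
have Ec : forall a, E (phi (cst a)) = 0.
  by move=> a; have := Elin' a 1; rewrite mulr1 E1 mulr0.
have rel : phi (cst r) * u - phi (cst s) * v = 1.
  have : phi (relf r s) = 0 by apply/ker; exists 1; rewrite mul1r.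
  by rewrite /relf !rmorphB !rmorphM rmorph1 => /eqP; rewrite subr_eq0 => /eqP.
have csM : forall a b, phi (cst a) * phi (cst b) = phi (cst (a * b)).
  by move=> a b; rewrite -rmorphM /cst !polyCM.
have ch : forall N, (0 < N)%N -> (N%:R : A) <> 0.
  move=> N N0 HN.
  have e1 : phi (cst ((N%:R : CC)%:A)) = N%:R.
    by rewrite scaler_nat /cst polyC_natr polyC_natr rmorph_nat.
  have : phi (cst ((N%:R : CC)%:A)) * phi (cst (((N%:R : CC)^-1)%:A)) = 1.
    rewrite csM mulr_algl scalerA mulfV ?charCC // scale1r.
    by rewrite /cst !polyC1 rmorph1.
  by rewrite e1 HN mul0r => /esym/eqP; rewrite oner_eq0.
have key : forall D, is_LND (fun c : CC => phi (cst (c%:A))) D ->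
    (forall x, D x = (u * D v - v * D u) * E x) /\ E (u * D v - v * D u) = 0.
  move=> D HD; have [[Dadd _ Dmul] LN] := HD.
  have Dc : forall a, D (phi (cst a)) = 0.
    by move=> a; apply: (proj2 (ML (phi (cst a)))); [exists a|].
  have Dlin : forall a x, D (phi (cst a) * x) = phi (cst a) * D x.
    by move=> a x; rewrite Dmul Dc mulr0 addr0.
  have D1 : D 1 = 0 by have := Dc 1; rewrite /cst !polyC1 rmorph1.
  have DB : forall x y, D (x - y) = D x - D y.
    move=> x y; have := Dadd (x - y) y; rewrite subrK => ->.
    by rewrite addrK.
  have Drel : phi (cst r) * D u = phi (cst s) * D v.
    have := congr1 D rel; rewrite DB !Dlin D1 => /eqP; rewrite subr_eq0.
    by move/eqP.
  set h := u * D v - v * D u.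
  have Du : D u = phi (cst s) * h.
    transitivity (D u * (phi (cst r) * u - phi (cst s) * v)); first by rewrite rel mulr1.
    transitivity (u * (phi (cst r) * D u) - phi (cst s) * v * D u); first by ring.
    by rewrite Drel /h; ring.
  have Dv : D v = phi (cst r) * h.
    transitivity (D v * (phi (cst r) * u - phi (cst s) * v)); first by rewrite rel mulr1.
    transitivity (phi (cst r) * u * D v - v * (phi (cst s) * D v)); first by ring.
    by rewrite -Drel /h; ring.
  have Dh : forall x, D x = h * E x.
    move=> x; have [p <-] := surj x.
    apply: (@poly_closed _ _ phi (fun x => D x = h * E x)).
    - by move=> a; rewrite Dc Ec mulr0.
    - by rewrite Du Eu mulrC.
    - by rewrite Dv Ev mulrC.
    - by move=> x1 y1 h1 h2; rewrite Dadd Eadd h1 h2 mulrDr.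
    - by move=> x1 y1 h1 h2; rewrite Dmul Emul h1 h2; ring.
  split => //.
  have [h0|h0] := eqVneq h 0; first by rewrite h0 (der0 Eadd).
  have [z [z1 z2]] : exists w, D w <> 0 /\ D (D w) = 0.
    have [Du0|Du0] := eqVneq (D u) 0.
      have [Dv0|Dv0] := eqVneq (D v) 0.
        by move: h0; rewrite /h Du0 Dv0 !mulr0 subrr eqxx.
      have [k hk] := LN v; exact: (slice Dadd k v hk (elimN eqP Dv0)).
    have [k hk] := LN u; exact: (slice Dadd k u hk (elimN eqP Du0)).
  have Dh0 : D h = 0.
    apply: (fact_closed Dadd Dmul LN dom ch h (E z)); first by rewrite -Dh.
    by rewrite -Dh.
  have := Dh h; rewrite Dh0 => /esym /dom [] //.
  by move/eqP: h0.
split.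
- move=> HD; have [Dh Eh] := key D HD.
  have [a ha] : exists a, u * D v - v * D u = phi (cst a).
    apply/ML => D' HD'; have [D'h _] := key D' HD'.
    by rewrite D'h Eh mulr0.
  by exists a => x; rewrite Dh ha.
- move=> [a HD].
  have Dadd : forall x y, D (x + y) = D x + D y.
    by move=> x y; rewrite !HD Eadd mulrDr.
  have Dmul : forall x y, D (x * y) = x * D y + y * D x.
    by move=> x y; rewrite !HD Emul; ring.
  split; first split => //.
    by move=> c x; rewrite /= !HD Elin' mulrCA.
  move=> b; have [p <-] := surj b.
  apply: (@poly_closed _ _ phi (fun x => exists n, iter n D x = 0)).
  - by move=> c; exists 1%N; rewrite /= HD Ec mulr0.
  - by exists 2%N; rewrite /= !HD Eu csM Ec mulr0.
  - by exists 2%N; rewrite /= !HD Ev csM Ec mulr0.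
  - move=> x y [n1 h1] [n2 h2]; exists (n1 + n2)%N.
    rewrite (iter_add Dadd) {1}addnC !iterD h1 h2 !(iter_0 Dadd) addr0 //.
  - move=> x y [n1 h1] [n2 h2]; exists (n1 + n2)%N.
    exact: (nil_mul Dadd Dmul _ n1 n2).
Qed.
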